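(* Let $G$ be a coarsely bottlenecked graph and let $H$ be a finite graph which is not an asymptotic minor of $G$. Then $G$ is quasi-isometric to a graph $G'$ which contains no $5$-fat $H$ minor. Furthermore, such a $G'$ may be constructed from $G$ by repeatedly (finitely many times) taking $(2,2)$-skeletons, starting from $G$, and the constants of this quasi-isometry may be determined by the scale and coarse bottlenecking number of $G$ (i.e. the constants $M,n$ for which $G$ is $M$-fat $n$-bottlenecked) together with a scale $M_0$ at which $G$ does not contain $H$ as an $M_0$-fat minor.
   Context: All graphs are connected (and unbounded); multi-edges are allowed. $d$ denotes the graph metric on vertices (least number of edges in a path). For $M\ge 0$: sets $X,Y$ of vertices are $M$-disjoint if $d(x,y)>M$ for all $x\in X,y\in Y$; a set $X$ is $M$-connected if any two of its points are joined by a finite sequence of points of $X$ in which consecutive points have distance $\le M$; $N_M(S)=\{y: d(s,y)<M \text{ for some } s\in S\}$. An $X,Y$ path is a path from a vertex of $X$ to a vertex of $Y$. Coarse bottlenecking: $G$ is $M$-fat $n$-bottlenecked ($M,n\in\mathbb N$) if for any two connected $M$-disjoint subgraphs $X,Y\subset G$ there is a set $S\subset V(G)\setminus(V(X)\cup V(Y))$ with $|S|=n$ such that every $X,Y$ path meets $N_M(S)$. $G$ is coarsely bottlenecked if it is $M$-fat $n$-bottlenecked for some $M,n$. Fat minors: $H$ is an $M$-fat minor of $G$ if there are connected subgraphs (branch sets) $B_v$, $v\in V(H)$, and paths (branch paths) $P_e$, $e\in E(H)$, with $P_e$ joining $B_u$ to $B_v$ for $e=uv$, such that any two of these sets are $M$-disjoint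 unless they correspond to an incident vertex–edge pair of $H$. $H$ is an asymptotic minor of $G$ if $G$ has an $M$-fat $H$ minor for every $M\in\mathbb N$. Skeletons: given $G$, a root $x_0\in V(G)$, a scale $\lambda\ge1$ and a connectivity $k\ge1$, the layers are $A_{N,\lambda}=\{x\in V(G): N\lambda<d(x,x_0)\le (N+1)\lambda\}$ for integers $N$; each layer is partitioned into blocks, its maximal $k$-connected subsets (distances measured in $G$). The skeleton $G_{\lambda,k}$ has one vertex for each block and an edge between two blocks iff some edge of $G$ joins a vertex of one to a vertex of the other. The $(2,2)$-skeleton of a graph is this construction with $\lambda=k=2$ (the root of a skeleton of $G_{\lambda,k}$ being the block of $x_0$). *)

(* Defs.v *)
(* Graphs on an arbitrary vertex type V, given by an
   adjacency relation (multi-edges are irrelevant for every notion used). *)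
From Stdlib Require Import List ZArith.
Import ListNotations.

Set Implicit Arguments.

Section Graphs.
Variable V : Type.
Variable adj : V -> V -> Prop.

Fixpoint is_walk (x : V) (l : list V) : Prop :=
  match l with
  | [] => True
  | y :: l' => adj x y /\ is_walk y l'
  end.

Definition dist_le (x y : V) (n : nat) : Prop :=
  exists l, is_walk x l /\ List.last (x :: l) x = y /\ length l <= n.

Definition dist_lt (x y : V) (n : nat) : Prop :=
  exists l, is_walk x l /\ List.last (x :: l) x = y /\ length l < n.

Definition dist (x y : V) (n : nat) : Prop :=
  dist_le x y n /\ forall m, dist_le x y m -> n <= m.

Definition symmetric_adj : Prop := forall x y, adj x y -> adj y x.

Definition connected_graph : Prop := forall x y, exists n, dist_le x y n.

Definition unbounded_graph : Prop := forall r, exists x y, ~ dist_le x y r.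

Definition gpath (p : list V) (a b : V) : Prop :=
  exists l, p = a :: l /\ is_walk a l /\ List.last p a = b /\ NoDup p.

Definition M_disjoint (M : nat) (X Y : V -> Prop) : Prop :=
  forall x y, X x -> Y y -> ~ dist_le x y M.

Definition conn_set (X : V -> Prop) : Prop :=
  (exists x, X x) /\
  forall x y, X x -> X y ->
    exists l, is_walk x l /\ List.last (x :: l) x = y /\ Forall X l.

Definition nbhd (M : nat) (S : list V) (z : V) : Prop :=
  exists s, In s S /\ dist_lt s z M.

Definition fat_bottlenecked (M n : nat) : Prop :=
  forall X Y : V -> Prop, conn_set X -> conn_set Y -> M_disjoint M X Y ->
    exists S : list V,
      length S = n /\ NoDup S /\ (forall s, In s S -> ~ X s /\ ~ Y s) /\
      forall p x y, X x -> Y y -> gpath p x y ->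
        exists z, In z p /\ nbhd M S z.

Definition coarsely_bottlenecked : Prop := exists M n, fat_bottlenecked M n.

(* A finite (multi)graph H: vertex type VH, edge type EH, endpoints ends. *)
Definition M_fat_minor (M : nat) (VH EH : Type) (ends : EH -> VH * VH) : Prop :=
  exists (B : VH -> V -> Prop) (P : EH -> list V),
    (forall v, conn_set (B v)) /\
    (forall e, exists a b, B (fst (ends e)) a /\ B (snd (ends e)) b /\ gpath (P e) a b) /\
    (forall u v, u <> v -> M_disjoint M (B u) (B v)) /\
    (forall e f, e <> f -> M_disjoint M (fun x => In x (P e)) (fun x => In x (P f))) /\
    (forall v e, v <> fst (ends e) -> v <> snd (ends e) ->
        M_disjoint M (B v) (fun x => In x (P e))).

Definition asymptotic_minor (VH EH : Type) (ends : EH -> VH * VH) : Prop :=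
  forall M, M_fat_minor M ends.

Definition in_layer (x0 : V) (lam : nat) (N : Z) (x : V) : Prop :=
  exists d, dist x x0 d /\
    (N * Z.of_nat lam < Z.of_nat d <= (N + 1) * Z.of_nat lam)%Z.

Fixpoint kchain (k : nat) (X : V -> Prop) (x : V) (l : list V) : Prop :=
  match l with
  | [] => True
  | y :: l' => X y /\ dist_le x y k /\ kchain k X y l'
  end.

(* X is k-connected (distances measured in G) *)
Definition k_connected (k : nat) (X : V -> Prop) : Prop :=
  forall x y, X x -> X y -> exists l, kchain k X x l /\ List.last (x :: l) x = y.

Definition is_block (k : nat) (L B : V -> Prop) : Prop :=
  (exists x, B x) /\ (forall x, B x -> L x) /\ k_connected k B /\
  forall B' : V -> Prop, (forall x, B x -> B' x) -> (forall x, B' x -> L x) ->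
    k_connected k B' -> forall x, B' x -> B x.

Definition skel_vtx (x0 : V) (lam k : nat) : Type :=
  { B : V -> Prop | exists N : Z, is_block k (in_layer x0 lam N) B }.

Definition skel_adj (x0 : V) (lam k : nat) (B1 B2 : skel_vtx x0 lam k) : Prop :=
  exists x y, proj1_sig B1 x /\ proj1_sig B2 y /\ adj x y.

End Graphs.

(* f : V -> W is a quasi-isometry with constants K (multiplicative) and C
   (additive, also the density constant). *)
Definition quasi_isometry (V W : Type) (adjV : V -> V -> Prop) (adjW : W -> W -> Prop)
  (K C : nat) : Prop :=
  exists f : V -> W,
    (forall x y n m, dist adjV x y n -> dist adjW (f x) (f y) m ->
        n <= K * m + C /\ m <= K * n + C) /\
    (forall w, exists x, dist_le adjW (f x) w C).

(* iter_skel22 V adj x0 W adjW r k : the rooted graph (W, adjW, r) is obtained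
   from (V, adj, x0) by taking (2,2)-skeletons k times, the root of each
   skeleton being the block containing the previous root. *)
Unset Implicit Arguments.
Inductive iter_skel22 (V : Type) (adj : V -> V -> Prop) (x0 : V) :
  forall (W : Type), (W -> W -> Prop) -> W -> nat -> Prop :=
| iter_skel22_0 : iter_skel22 V adj x0 V adj x0 0
| iter_skel22_S : forall (W : Type) (adjW : W -> W -> Prop) (r : W) (k : nat)
    (B : skel_vtx adjW r 2 2),
    iter_skel22 V adj x0 W adjW r k ->
    proj1_sig B r ->
    iter_skel22 V adj x0 (skel_vtx adjW r 2 2) (@skel_adj W adjW r 2 2) B (S k).

(* Main.v *)
Require Import Defs.
From Stdlib Require Import List ZArith.
From Stdlib Require Import Lia Arith Classical Relations.
From Stdlib Require Import FunctionalExtensionality PropExtensionality ProofIrrelevance ClassicalEpsilon.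
Import ListNotations.

Section Basic.
Variable V : Type.
Variable adj : V -> V -> Prop.
Hypothesis Hsym : symmetric_adj adj.

Lemma last_default (x d d' : V) l : last (x :: l) d = last (x :: l) d'.
Proof. revert x; induction l as [|a l IH]; intros x; [reflexivity|]. change (last (a :: l) d = last (a :: l) d'). apply IH. Qed.

Lemma last_app_ne (l1 l2 : list V) d : l2 <> [] -> last (l1 ++ l2) d = last l2 d.
Proof.
  intros H; induction l1; simpl; auto.
  rewrite IHl1. destruct l2; [congruence|]. simpl. destruct (l1 ++ v :: l2) eqn:E; auto.
  destruct l1; discriminate.
Qed.

Lemma last_cons_app (x : V) l1 l2 :
  last (x :: l1 ++ l2) x = last (last (x :: l1) x :: l2) (last (x :: l1) x).
Proof.
  destruct l2 as [|y l2].
  - rewrite app_nil_r. destruct l1; reflexivity.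
  - change (x :: l1 ++ y :: l2) with ((x :: l1) ++ y :: l2).
    rewrite (last_app_ne (x :: l1) (y :: l2)) by discriminate.
    transitivity (last (y :: l2) (last (x :: l1) x)); [apply last_default | reflexivity].
Qed.

Lemma last_cons2 (x y : V) l : last (x :: y :: l) x = last (y :: l) y.
Proof. change (last (y :: l) x = last (y :: l) y). apply last_default. Qed.

Lemma walk_app x l1 l2 :
  is_walk adj x (l1 ++ l2) <-> is_walk adj x l1 /\ is_walk adj (last (x :: l1) x) l2.
Proof.
  revert x; induction l1 as [|y l1 IH]; intros x; cbn [is_walk app].
  - tauto.
  - rewrite IH. rewrite last_cons2. tauto.
Qed.

Lemma dl_refl x n : dist_le adj x x n.
Proof. exists []. simpl. repeat split; auto. lia. Qed.

Lemma dl_mono x y a b : dist_le adj x y a -> a <= b -> dist_le adj x y b.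
Proof. intros [l [H1 [H2 H3]]] Hab. exists l. repeat split; auto. lia. Qed.

Lemma dl_adj x y : adj x y -> dist_le adj x y 1.
Proof. intros H. exists [y]. simpl. repeat split; auto. Qed.

Lemma dl_trans x y z a b : dist_le adj x y a -> dist_le adj y z b -> dist_le adj x z (a + b).
Proof.
  intros [l1 [H1 [H2 H3]]] [l2 [H4 [H5 H6]]].
  exists (l1 ++ l2). split; [|split].
  - apply walk_app. rewrite H2. auto.
  - rewrite last_cons_app. rewrite H2. auto.
  - rewrite length_app. lia.
Qed.

Lemma dl_walk x l : is_walk adj x l -> dist_le adj x (last (x :: l) x) (length l).
Proof. intros H. exists l. auto. Qed.

Lemma dl_sym x y a : dist_le adj x y a -> dist_le adj y x a.
Proof.
  intros [l [H1 [H2 H3]]]. subst y. apply dl_mono with (length l); auto. clear H3.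
  revert x H1; induction l as [|y l IH]; intros x H1.
  - apply dl_refl.
  - destruct H1 as [Ha Hw]. simpl length.
    replace (last (x :: y :: l) x) with (last (y :: l) y) by (symmetry; apply last_cons2).
    replace (S (length l)) with (length l + 1) by lia.
    eapply dl_trans. apply IH; auto. apply dl_adj. apply Hsym; auto.
Qed.

Lemma dlt_le x y a : dist_lt adj x y a -> a >= 1 /\ dist_le adj x y (a - 1).
Proof. intros [l [H1 [H2 H3]]]. split; [lia|]. exists l. repeat split; auto. lia. Qed.

Lemma dle_lt x y a : dist_le adj x y a -> dist_lt adj x y (S a).
Proof. intros [l [H1 [H2 H3]]]. exists l. repeat split; auto. lia. Qed.

Lemma walk_pts x l z : is_walk adj x l -> In z (x :: l) ->
  dist_le adj x z (length l) /\ dist_le adj z (last (x :: l) x) (length l).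
Proof.
  revert x; induction l as [|y l IH]; intros x Hw Hin.
  - destruct Hin as [<-|[]]. split; apply dl_refl.
  - destruct Hw as [Ha Hw]. simpl length.
    replace (last (x :: y :: l) x) with (last (y :: l) y) by (symmetry; apply last_cons2).
    destruct Hin as [<-|Hin].
    + split. apply dl_refl. replace (S (length l)) with (1 + length l) by lia.
      eapply dl_trans. apply dl_adj; eauto. apply dl_walk; auto.
    + destruct (IH y Hw Hin) as [A B]. split.
      * replace (S (length l)) with (1 + length l) by lia.
        eapply dl_trans. apply dl_adj; eauto. auto.
      * eapply dl_mono; eauto.
Qed.

Definition pw (P : V -> Prop) (x y : V) : Prop :=
  exists l, is_walk adj x l /\ last (x :: l) x = y /\ Forall P l.

Lemma pw_refl P x : pw P x x.
Proof. exists []. simpl; auto. Qed.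

Lemma pw_trans P x y z : pw P x y -> pw P y z -> pw P x z.
Proof.
  intros [l1 [H1 [H2 H3]]] [l2 [H4 [H5 H6]]].
  exists (l1 ++ l2). split; [|split].
  - apply walk_app. rewrite H2. auto.
  - rewrite last_cons_app. rewrite H2. auto.
  - apply Forall_app; auto.
Qed.

Lemma pw_mono (P Q : V -> Prop) x y : (forall z, P z -> Q z) -> pw P x y -> pw Q x y.
Proof. intros H [l [H1 [H2 H3]]]. exists l. repeat split; auto. eapply Forall_impl; eauto. Qed.

Lemma pw_edge (P : V -> Prop) x y : adj x y -> P y -> pw P x y.
Proof. intros H1 H2. exists [y]. simpl. auto. Qed.

Lemma pw_rev (P : V -> Prop) x y : P x -> pw P x y -> pw P y x.
Proof.
  intros Px [l [H1 [H2 H3]]]. subst y. revert x Px H1 H3.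
  induction l as [|y l IH]; intros x Px H1 H3.
  - apply pw_refl.
  - destruct H1 as [Ha Hw]. inversion H3; subst.
    replace (last (x :: y :: l) x) with (last (y :: l) y) by (symmetry; apply last_cons2).
    eapply pw_trans. apply IH; auto. apply pw_edge; auto.
Qed.

Lemma pw_le1 (P : V -> Prop) x y : dist_le adj x y 1 -> P y -> pw P x y.
Proof.
  intros [l [H1 [H2 H3]]] Py. destruct l as [|a [|b l]]; simpl in *.
  - subst. apply pw_refl.
  - subst. apply pw_edge; tauto.
  - lia.
Qed.

Lemma pw_le2 (P : V -> Prop) x y : dist_le adj x y 2 -> P y ->
  (forall z, dist_le adj x z 1 -> P z) -> pw P x y.
Proof.
  intros [l [H1 [H2 H3]]] Py Hn. destruct l as [|a [|b [|c l]]]; simpl in *.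
  - subst. apply pw_refl.
  - subst. apply pw_edge; tauto.
  - subst. destruct H1 as [Ha [Hb _]]. eapply pw_trans; apply pw_edge; eauto.
    apply Hn. apply dl_adj; auto.
  - lia.
Qed.

Lemma shorten x l : is_walk adj x l ->
  exists p, gpath adj p x (last (x :: l) x) /\ incl p (x :: l).
Proof.
  revert x; induction l as [|y l IH]; intros x Hw.
  - exists [x]. split.
    + exists []. simpl. repeat split; auto. constructor; auto. constructor.
    + apply incl_refl.
  - destruct Hw as [Ha Hw].
    destruct (IH y Hw) as [p [[l' [Hp [Hw' [Hl Hnd]]]] Hinc]].
    replace (last (x :: y :: l) x) with (last (y :: l) y) by (symmetry; apply last_cons2).
    destruct (classic (In x p)) as [Hin|Hnin].
    + destruct (in_split x p Hin) as [p1 [p2 Hsp]].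
      exists (x :: p2). split.
      * exists p2. split; auto. split; [|split].
        -- rewrite Hp in Hsp. destruct p1 as [|a p1].
           ++ simpl in Hsp. inversion Hsp; subst. auto.
           ++ simpl in Hsp. inversion Hsp; subst.
              apply walk_app in Hw'. destruct Hw' as [_ Hw']. simpl in Hw'.
              destruct Hw'. auto.
        -- rewrite <- Hl. rewrite Hsp.
           change (x :: p2) with ([] ++ x :: p2).
           rewrite !last_app_ne by discriminate. simpl. apply last_default.
        -- rewrite Hsp in Hnd. apply NoDup_app_remove_l in Hnd. auto.
      * intros z Hz. destruct Hz as [<-|Hz]; [left; auto|].
        right. apply Hinc. rewrite Hsp. apply in_or_app; right; right; auto.
    + exists (x :: p). split.
      * exists p. split; auto. split; [|split].
        -- rewrite Hp. split; auto.
        -- rewrite <- Hl. rewrite Hp. apply last_cons2.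
        -- constructor; auto.
      * intros z [<-|Hz]; [left; auto|right; auto].
Qed.

End Basic.

Lemma min_ex (P : nat -> Prop) : (exists n, P n) -> exists n, P n /\ forall m, P m -> n <= m.
Proof.
  intros [n Hn]. induction n as [n IH] using (well_founded_induction lt_wf).
  destruct (classic (exists m, P m /\ m < n)) as [[m [Hm Hlt]]|Hno].
  - apply (IH m Hlt Hm).
  - exists n. split; auto. intros m Hm. destruct (le_lt_dec n m); auto.
    exfalso. apply Hno. eauto.
Qed.

Definition WB (A : Type) (ad : A -> A -> Prop) (M n : nat) : Prop :=
  forall X Y : A -> Prop, conn_set ad X -> conn_set ad Y -> M_disjoint ad M X Y ->
    exists S : list A, length S <= n /\
      forall p x y, X x -> Y y -> gpath ad p x y -> exists z, In z p /\ nbhd ad M S z.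

Section Skel.
Variable V : Type.
Variable adj : V -> V -> Prop.
Hypothesis Hsym : symmetric_adj adj.
Hypothesis Hconn : connected_graph adj.
Variable r : V.

Lemma hgt_ex x : exists d, dist adj x r d.
Proof.
  destruct (min_ex (fun n => dist_le adj x r n) (Hconn x r)) as [d [H1 H2]].
  exists d. split; auto.
Qed.

Lemma dist_unique x y a b : dist adj x y a -> dist adj x y b -> a = b.
Proof. intros [H1 H2] [H3 H4]. specialize (H2 _ H3). specialize (H4 _ H1). lia. Qed.

Definition Lay (N : Z) := in_layer adj r 2 N.

Lemma lay_iff N x : Lay N x <-> exists d, dist adj x r d /\ (2 * N < Z.of_nat d <= 2 * N + 2)%Z.
Proof.
  unfold Lay, in_layer. change (Z.of_nat 2) with 2%Z.
  split; intros [d [H1 H2]]; exists d; split; auto; lia.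
Qed.

Lemma lay_ex x : exists N, Lay N x.
Proof.
  destruct (hgt_ex x) as [d Hd]. destruct (Nat.Even_or_Odd d) as [[k Hk]|[k Hk]].
  - exists (Z.of_nat k - 1)%Z. apply lay_iff. exists d. split; auto. lia.
  - exists (Z.of_nat k). apply lay_iff. exists d. split; auto. lia.
Qed.

Lemma lay_unique N N' x : Lay N x -> Lay N' x -> N = N'.
Proof.
  rewrite !lay_iff. intros [d [H1 H2]] [d' [H3 H4]].
  pose proof (dist_unique _ _ _ _ H1 H3). subst. lia.
Qed.

Definition Rl N y z := Lay N y /\ Lay N z /\ dist_le adj y z 2.

Definition comp x y := exists N, Lay N x /\ clos_refl_trans_1n V (Rl N) x y.

Lemma crt_trans R (x y z : V) : clos_refl_trans_1n V R x y -> clos_refl_trans_1n V R y z ->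
  clos_refl_trans_1n V R x z.
Proof. intros H; induction H; auto. intros. econstructor; eauto. Qed.

Lemma crt_lay N x y : clos_refl_trans_1n V (Rl N) x y -> Lay N x -> Lay N y.
Proof. induction 1; auto. intros. apply IHclos_refl_trans_1n. destruct H; tauto. Qed.

Lemma crt_sym N x y : clos_refl_trans_1n V (Rl N) x y -> clos_refl_trans_1n V (Rl N) y x.
Proof.
  induction 1. constructor.
  eapply crt_trans; eauto. econstructor; [|constructor].
  destruct H as [A [B C]]. split; auto. split; auto. apply dl_sym; auto.
Qed.

Lemma comp_refl x : comp x x.
Proof. destruct (lay_ex x) as [N HN]. exists N. split; auto. constructor. Qed.

Lemma comp_lay N x y : comp x y -> Lay N x -> Lay N y.
Proof.
  intros [N' [H1 H2]] H3. rewrite (lay_unique _ _ _ H3 H1). eapply crt_lay; eauto.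
Qed.

Lemma comp_trans x y z : comp x y -> comp y z -> comp x z.
Proof.
  intros [N [H1 H2]] [N' [H3 H4]]. exists N. split; auto.
  assert (Lay N y) by (eapply crt_lay; eauto).
  rewrite (lay_unique _ _ _ H3 H) in H4. eapply crt_trans; eauto.
Qed.

Lemma comp_sym x y : comp x y -> comp y x.
Proof.
  intros [N [H1 H2]]. exists N. split. eapply crt_lay; eauto. apply crt_sym; auto.
Qed.

Lemma kchain_crt N (X : V -> Prop) y l : (forall a, X a -> Lay N a) -> Lay N y ->
  kchain adj 2 X y l -> clos_refl_trans_1n V (Rl N) y (last (y :: l) y).
Proof.
  revert y; induction l as [|z l IH]; intros y HX Hy Hk.
  - constructor.
  - destruct Hk as [A [B C]]. rewrite last_cons2.
    apply Relation_Operators.rt1n_trans with z.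
    + split; [auto|split; [auto|exact B]].
    + apply IH; auto.
Qed.

Lemma crt_kchain N (X : V -> Prop) y z : (forall a b, X a -> Rl N a b -> X b) -> X y ->
  clos_refl_trans_1n V (Rl N) y z -> exists l, kchain adj 2 X y l /\ last (y :: l) y = z.
Proof.
  intros HX Hy H. induction H.
  - exists []. simpl. auto.
  - assert (X y) by eauto. destruct (IHclos_refl_trans_1n H1) as [l [A B]].
    exists (y :: l). split.
    + split; auto. split; auto. destruct H; tauto.
    + rewrite last_cons2. auto.
Qed.

Lemma kchain_mono k (X Y : V -> Prop) y l : (forall a, X a -> Y a) -> kchain adj k X y l -> kchain adj k Y y l.
Proof. revert y; induction l; simpl; intros; auto. destruct H0 as [A [B C]]. eauto. Qed.

Lemma kchain_Forall k (X : V -> Prop) y l : kchain adj k X y l -> Forall X l.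
Proof. revert y; induction l; simpl; intros; auto. destruct H as [A [B C]]. eauto. Qed.

Lemma comp_block x : exists N, is_block adj 2 (Lay N) (comp x).
Proof.
  destruct (lay_ex x) as [N HN]. exists N. split; [|split; [|split]].
  - exists x. apply comp_refl.
  - intros y Hy. eapply comp_lay; eauto.
  - intros y z Hy Hz. assert (comp y z) by (eapply comp_trans; [apply comp_sym|]; eauto).
    destruct H as [N' [H1 H2]]. apply (crt_kchain N'); auto.
    + intros a b Ha Hab. eapply comp_trans; eauto. exists N'. split.
      * destruct Hab; tauto.
      * econstructor; eauto. constructor.
  - intros B' H1 H2 H3 y Hy. destruct (H3 x y) as [l [A B]]; auto.
    apply H1, comp_refl. exists N. split; auto. subst y.
    apply kchain_crt with B'; auto.
Qed.

Lemma block_comp N b x : is_block adj 2 (Lay N) b -> b x -> forall y, b y <-> comp x y.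
Proof.
  intros [Hne [Hsub [Hk Hmax]]] Hx.
  assert (fwd : forall y, b y -> comp x y).
  { intros y Hy. destruct (Hk x y Hx Hy) as [l [A B]]. exists N. split; auto.
    subst y. apply kchain_crt with b; auto. }
  intros y; split; auto.
  apply Hmax; auto.
  - intros z Hz. eapply comp_lay; eauto.
  - destruct (comp_block x) as [N' HB]. apply HB.
Qed.

Notation skv := (skel_vtx adj r 2 2).
Definition sadj := @skel_adj V adj r 2 2.

Definition pi (x : V) : skv := exist _ (comp x) (comp_block x).

Lemma pi_in x : proj1_sig (pi x) x.
Proof. apply comp_refl. Qed.

Lemma pi_eq (w : skv) x : proj1_sig w x -> pi x = w.
Proof.
  destruct w as [b Hbp]. simpl. intros Hx. pose proof Hbp as [N Hb].
  assert (E : comp x = b).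
  { apply functional_extensionality. intros y. apply propositional_extensionality.
    symmetry. apply (block_comp N); auto. }
  unfold pi. revert Hbp. rewrite <- E. intros Hbp. f_equal. apply proof_irrelevance.
Qed.

Lemma comp_pi x y : comp x y -> pi y = pi x.
Proof. intros H. apply pi_eq. exact H. Qed.

Lemma blk_ne (w : skv) : exists x, proj1_sig w x.
Proof. destruct w as [b Hb]. simpl. destruct Hb as [N [H _]]. exact H. Qed.

Lemma sadj_pi x y : adj x y -> sadj (pi x) (pi y).
Proof. intros H. exists x, y. split; [apply pi_in|split; [apply pi_in|auto]]. Qed.

Lemma pi_lip x y a : dist_le adj x y a -> dist_le sadj (pi x) (pi y) a.
Proof.
  intros [l [H1 [H2 H3]]]. subst y. exists (map pi l). split; [|split].
  - clear H3. revert x H1; induction l; simpl; auto. intros x [A B]. split; auto. apply sadj_pi; auto.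
  - clear. revert x; induction l; intros; auto. rewrite !last_cons2. simpl map. rewrite last_cons2. auto.
  - rewrite length_map. auto.
Qed.

Lemma sym_sadj : symmetric_adj sadj.
Proof. intros w1 w2 [x [y [A [B C]]]]. exists y, x. auto. Qed.

Lemma conn_sadj : connected_graph sadj.
Proof.
  intros w1 w2. destruct (blk_ne w1) as [x Hx]. destruct (blk_ne w2) as [y Hy].
  destruct (Hconn x y) as [n Hn]. exists n. rewrite <- (pi_eq _ _ Hx), <- (pi_eq _ _ Hy).
  apply pi_lip; auto.
Qed.

Lemma pi_surj (w : skv) : exists x, pi x = w.
Proof. destruct (blk_ne w) as [x Hx]. exists x. apply pi_eq; auto. Qed.


Notation pwa := (pw V adj).

Lemma hgt_adj x y a b : adj x y -> dist adj x r a -> dist adj y r b -> b <= a + 1.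
Proof.
  intros H [H1 _] [_ H2]. apply H2. replace (a + 1) with (1 + a) by lia.
  eapply dl_trans. apply dl_adj. apply Hsym; eauto. auto.
Qed.

Lemma two_step x y z : adj x y -> adj y z -> dist_le sadj (pi x) (pi z) 1.
Proof.
  intros Hxy Hyz.
  destruct (lay_ex x) as [Nx Hx]. destruct (lay_ex y) as [Ny Hy]. destruct (lay_ex z) as [Nz Hz].
  pose proof Hx as Hx'. pose proof Hy as Hy'. pose proof Hz as Hz'.
  apply lay_iff in Hx' as [dx [Dx Bx]]. apply lay_iff in Hy' as [dy [Dy By]].
  apply lay_iff in Hz' as [dz [Dz Bz]].
  pose proof (hgt_adj _ _ _ _ Hxy Dx Dy). pose proof (hgt_adj _ _ _ _ (Hsym _ _ Hxy) Dy Dx).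
  pose proof (hgt_adj _ _ _ _ Hyz Dy Dz). pose proof (hgt_adj _ _ _ _ (Hsym _ _ Hyz) Dz Dy).
  assert (Nx = Nz \/ Nx = Ny \/ Ny = Nz) as [E|[E|E]] by lia; subst.
  - assert (comp x z).
    { exists Nz. split; auto. apply Relation_Operators.rt1n_trans with z; [|constructor].
      split; auto. split; auto. replace 2 with (1 + 1) by lia.
      eapply dl_trans; apply dl_adj; eauto. }
    rewrite (comp_pi _ _ H3). apply dl_refl.
  - assert (comp x y).
    { exists Ny. split; auto. apply Relation_Operators.rt1n_trans with y; [|constructor].
      split; auto. split; auto. eapply dl_mono. apply dl_adj; eauto. lia. }
    rewrite <- (comp_pi _ _ H3). apply dl_adj. apply sadj_pi; auto.
  - assert (comp y z).
    { exists Nz. split; auto. apply Relation_Operators.rt1n_trans with z; [|constructor].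
      split; auto. split; auto. eapply dl_mono. apply dl_adj; eauto. lia. }
    rewrite (comp_pi _ _ H3). apply dl_adj. apply sadj_pi; auto.
Qed.

Lemma half_walk L : forall l x, length l <= L -> is_walk adj x l ->
  exists k, 2 * k <= length l + 1 /\ dist_le sadj (pi x) (pi (last (x :: l) x)) k.
Proof.
  induction L as [|L IH]; intros l x Hl Hw.
  - destruct l; simpl in Hl; [|lia]. exists 0. split; [simpl; lia|]. apply dl_refl.
  - destruct l as [|y [|z l]].
    + exists 0. split; [simpl; lia|]. apply dl_refl.
    + exists 1. split; [simpl; lia|]. apply dl_adj. apply sadj_pi. destruct Hw; auto.
    + destruct Hw as [A [B C]]. simpl in Hl.
      destruct (IH l z ltac:(lia) C) as [k [K1 K2]].
      exists (1 + k). split. simpl. lia.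
      rewrite !last_cons2. eapply dl_trans; eauto. eapply two_step; eauto.
Qed.

Lemma pi_half x y a : dist_le adj x y (2 * a) -> dist_le sadj (pi x) (pi y) a.
Proof.
  intros [l [H1 [H2 H3]]]. destruct (half_walk (length l) l x (le_n _) H1) as [k [K1 K2]].
  subst y. eapply dl_mono; eauto. lia.
Qed.

Definition Lft (P : skv -> Prop) (z : V) : Prop := exists z', dist_le adj z' z 1 /\ P (pi z').

Lemma Lft_base (P : skv -> Prop) z : P (pi z) -> Lft P z.
Proof. intros H. exists z. split; auto. apply dl_refl. Qed.

Lemma comp_pw (P : skv -> Prop) x y : comp x y -> P (pi x) -> pwa (Lft P) x y.
Proof.
  intros [N [HN Hc]]. revert HN. induction Hc; intros HN HP.
  - apply pw_refl.
  - assert (Hc1 : comp x y).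
    { exists N. split; auto. apply Relation_Operators.rt1n_trans with y; [auto|constructor]. }
    pose proof (comp_pi _ _ Hc1) as E.
    eapply pw_trans.
    + apply pw_le2. destruct H as [_ [_ H]]; exact H.
      apply Lft_base. rewrite E; auto.
      intros z0 Hz. exists x. split; auto.
    + apply IHHc. destruct H; tauto. rewrite E; auto.
Qed.

Lemma lift_walk (P : skv -> Prop) lw : forall w0 x y, is_walk sadj w0 lw ->
  proj1_sig w0 x -> proj1_sig (last (w0 :: lw) w0) y ->
  (forall w, In w (w0 :: lw) -> P w) -> pwa (Lft P) x y.
Proof.
  induction lw as [|w1 lw IH]; intros w0 x y Hw Hx Hy HP.
  - simpl in Hy. rewrite <- (pi_eq _ _ Hx) in Hy, HP. apply comp_pw; auto. apply HP; left; auto.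
  - destruct Hw as [[a [c [Ha [Hc Hac]]]] Hw].
    rewrite last_cons2 in Hy.
    eapply pw_trans; [|eapply pw_trans].
    + rewrite <- (pi_eq _ _ Hx) in Ha, HP. apply comp_pw. exact Ha. apply HP; left; auto.
    + apply pw_edge. exact Hac. apply Lft_base. rewrite (pi_eq _ _ Hc). apply HP. right; left; auto.
    + apply (IH w1); auto. intros w Hin; apply HP; right; auto.
Qed.

Lemma lft_conn (P : skv -> Prop) : conn_set sadj P -> conn_set adj (Lft P).
Proof.
  intros [[w Hw] Hc]. split.
  - destruct (blk_ne w) as [x Hx]. exists x. apply Lft_base. rewrite (pi_eq _ _ Hx). auto.
  - intros a b [a' [Ha1 Ha2]] [b' [Hb1 Hb2]].
    destruct (Hc _ _ Ha2 Hb2) as [lw [W1 [W2 W3]]].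
    assert (pwa (Lft P) a' b').
    { apply (lift_walk P lw (pi a')); auto. apply pi_in. rewrite W2. apply pi_in.
      intros w2 [<-|Hin]; auto. eapply Forall_forall; eauto. }
    eapply pw_trans; [|eapply pw_trans; [exact H|]].
    + apply pw_le1. apply dl_sym; auto. apply Lft_base; auto.
    + apply pw_le1; auto. exists b'. auto.
Qed.

Lemma lft_disj (P Q : skv -> Prop) F : 1 <= F -> M_disjoint sadj F P Q ->
  M_disjoint adj (2 * F - 2) (Lft P) (Lft Q).
Proof.
  intros HF HD a b [a' [Ha1 Ha2]] [b' [Hb1 Hb2]] Hab.
  apply (HD _ _ Ha2 Hb2). apply pi_half.
  replace (2 * F) with (1 + ((2 * F - 2) + 1)) by lia.
  eapply dl_trans; eauto. eapply dl_trans; eauto. apply dl_sym; auto.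
Qed.

Lemma Md_mono A (ad : A -> A -> Prop) M M' (X Y X' Y' : A -> Prop) :
  M_disjoint ad M X Y -> M' <= M -> (forall z, X' z -> X z) -> (forall z, Y' z -> Y z) ->
  M_disjoint ad M' X' Y'.
Proof. intros H HM H1 H2 a b Ha Hb Hab. apply (H a b); auto. eapply dl_mono; eauto. Qed.

Lemma minor_lift (VH EH : Type) (ends : EH -> VH * VH) F : 1 <= F ->
  M_fat_minor sadj F ends -> M_fat_minor adj (2 * F - 2) ends.
Proof.
  intros HF [B' [P' [Hc [Hp [Hd1 [Hd2 Hd3]]]]]].
  assert (Hpath : forall e, exists p,
    (exists a b, Lft (B' (fst (ends e))) a /\ Lft (B' (snd (ends e))) b /\ gpath adj p a b) /\
    forall z, In z p -> Lft (fun w => In w (P' e)) z).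
  { intros e. destruct (Hp e) as [al [be [Hal [Hbe Hg]]]]. destruct Hg as [l [E1 [E2 [E3 E4]]]].
    destruct (blk_ne al) as [a Ha]. destruct (blk_ne be) as [b Hb].
    assert (pwa (Lft (fun w => In w (P' e))) a b) as [lp [W1 [W2 W3]]].
    { apply (lift_walk _ l al); auto.
      - rewrite E1 in E3. rewrite E3. auto.
      - intros w Hin. rewrite E1. auto. }
    destruct (shorten V adj a lp W1) as [p [Hg Hinc]]. exists p. split.
    - exists a, b. split; [|split].
      + apply Lft_base. rewrite (pi_eq _ _ Ha); auto.
      + apply Lft_base. rewrite (pi_eq _ _ Hb); auto.
      + rewrite W2 in Hg. auto.
    - intros z Hz. apply Hinc in Hz. destruct Hz as [<-|Hz].
      + apply Lft_base. rewrite (pi_eq _ _ Ha). rewrite E1; left; auto.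
      + eapply Forall_forall in W3; eauto. }
  exists (fun v => Lft (B' v)).
  exists (fun e => proj1_sig (constructive_indefinite_description _ (Hpath e))).
  split; [|split; [|split; [|split]]].
  - intros v. apply lft_conn; auto.
  - intros e. destruct (constructive_indefinite_description _ (Hpath e)) as [p [H1 H2]]. simpl. auto.
  - intros u v Huv. apply lft_disj; auto.
  - intros e f Hef.
    destruct (constructive_indefinite_description _ (Hpath e)) as [p [H1 H2]].
    destruct (constructive_indefinite_description _ (Hpath f)) as [q [H3 H4]]. simpl.
    eapply Md_mono. apply (lft_disj (fun w => In w (P' e)) (fun w => In w (P' f)) F HF (Hd2 e f Hef)).
    auto. auto. auto.
  - intros v e Hv1 Hv2.
    destruct (constructive_indefinite_description _ (Hpath e)) as [p [H1 H2]]. simpl.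
    eapply Md_mono. apply (lft_disj (B' v) (fun w => In w (P' e)) F HF (Hd3 v e Hv1 Hv2)).
    auto. auto. auto.
Qed.

Lemma WB_lift M n : WB V adj M n -> WB skv sadj (M + 1) n.
Proof.
  intros HWB X' Y' HX HY HD.
  destruct (HWB (Lft X') (Lft Y') (lft_conn _ HX) (lft_conn _ HY)) as [Sl [HS HSp]].
  { eapply Md_mono. apply (lft_disj X' Y' (M + 1)); auto. lia. lia. auto. auto. }
  exists (map pi Sl). split. rewrite length_map; auto.
  intros p' x' y' Hx' Hy' Hg. destruct Hg as [l [E1 [E2 [E3 E4]]]].
  destruct (blk_ne x') as [a Ha]. destruct (blk_ne y') as [b Hb].
  assert (pwa (Lft (fun w => In w p')) a b) as [lp [W1 [W2 W3]]].
  { apply (lift_walk _ l x'); auto.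
    - rewrite E1 in E3. rewrite E3. auto.
    - intros w Hin. rewrite E1. auto. }
  destruct (shorten V adj a lp W1) as [p [Hg Hinc]]. rewrite W2 in Hg.
  destruct (HSp p a b) as [z [Hz [s [Hs Hsz]]]]; auto.
  { apply Lft_base. rewrite (pi_eq _ _ Ha); auto. }
  { apply Lft_base. rewrite (pi_eq _ _ Hb); auto. }
  assert (Lft (fun w => In w p') z) as [z2 [Z1 Z2]].
  { apply Hinc in Hz. destruct Hz as [<-|Hz].
    + apply Lft_base. rewrite (pi_eq _ _ Ha). rewrite E1; left; auto.
    + eapply Forall_forall in W3; eauto. }
  exists (pi z2). split; auto. exists (pi s). split. apply in_map; auto.
  apply dlt_le in Hsz as [HM Hsz].
  replace (M + 1) with (S (M - 1 + 1)) by lia. apply dle_lt. apply pi_lip.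
  eapply dl_trans; eauto. apply dl_sym; auto.
Qed.

Lemma split_last (Q : V -> Prop) u l : Q u ->
  exists l1 l2, l = l1 ++ l2 /\ Q (last (u :: l1) u) /\ Forall (fun z => ~ Q z) l2.
Proof.
  intros Hu. induction l as [|y l IH] using rev_ind.
  - exists [], []. simpl. auto.
  - destruct IH as [l1 [l2 [E [H1 H2]]]].
    destruct (classic (Q y)) as [Hy|Hy].
    + exists (l ++ [y]), []. rewrite app_nil_r. split; auto. split; auto.
      change (u :: l ++ [y]) with ((u :: l) ++ [y]). rewrite last_last. auto.
    + exists l1, (l2 ++ [y]). split. rewrite E, app_assoc; auto. split; auto.
      apply Forall_app; auto.
Qed.

Lemma kchain_app k (X : V -> Prop) u l1 l2 : kchain adj k X u (l1 ++ l2) ->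
  kchain adj k X (last (u :: l1) u) l2.
Proof.
  revert u; induction l1 as [|a l1 IH]; intros u H; auto.
  destruct H as [A [B C]]. rewrite last_cons2. auto.
Qed.

Lemma cover R k : forall Sl, length Sl <= k -> forall u l,
  kchain adj 2 (fun _ => True) u l ->
  (forall c, In c (u :: l) -> exists s, In s Sl /\ dist_le adj s c R) ->
  dist_le adj u (last (u :: l) u) (k * (2 * R + 2)).
Proof.
  induction k as [|k IH]; intros Sl HS u l Hch Hcov.
  - destruct Sl; [|simpl in HS; lia]. destruct (Hcov u (or_introl eq_refl)) as [s [[] _]].
  - destruct (Hcov u (or_introl eq_refl)) as [s [Hs Hsu]].
    destruct (split_last (fun z => dist_le adj s z R) u l Hsu) as [l1 [l2 [E [H1 H2]]]].
    set (c := last (u :: l1) u) in *.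
    assert (Huc : dist_le adj u c (2 * R)).
    { replace (2 * R) with (R + R) by lia. eapply dl_trans; [apply dl_sym; eauto|]; eauto. }
    subst l. rewrite last_cons_app. fold c.
    destruct l2 as [|y l2].
    + simpl. eapply dl_mono; eauto. lia.
    + apply kchain_app in Hch. fold c in Hch. destruct Hch as [_ [Hcy Hch]].
      destruct (in_split s Sl Hs) as [S1 [S2 ES]].
      assert (dist_le adj y (last (y :: l2) y) (k * (2 * R + 2))).
      { apply (IH (S1 ++ S2)).
        - rewrite ES, length_app in HS. simpl in HS. rewrite length_app. lia.
        - auto.
        - intros c0 Hc0. assert (In c0 (u :: l1 ++ y :: l2)).
          { right. apply in_or_app. right. auto. }
          destruct (Hcov c0 H) as [s0 [Hs0 Hd0]]. exists s0. split; auto.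
          rewrite ES in Hs0. apply in_app_or in Hs0. destruct Hs0 as [Hs0|[<-|Hs0]].
          + apply in_or_app; auto.
          + exfalso. eapply Forall_forall in H2; eauto.
          + apply in_or_app; auto. }
      change (last (c :: y :: l2) c) with (last (y :: l2) c). rewrite (last_default _ _ c y).
      replace (S k * (2 * R + 2)) with (2 * R + (2 + k * (2 * R + 2))) by lia.
      eapply dl_trans; eauto. eapply dl_trans; eauto.
Qed.

Definition Dm M n := 2 * M + 4 + n * (4 * M + 6).

Lemma diam M n : WB V adj M n -> forall x y, comp x y -> dist_le adj x y (Dm M n).
Proof.
  intros HWB x y Hxy.
  destruct (lay_ex x) as [N HN].
  assert (HL : forall c, comp x c -> exists d, dist adj c r d /\ (2 * N < Z.of_nat d <= 2 * N + 2)%Z).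
  { intros c Hc. apply lay_iff. eapply comp_lay; eauto. }
  destruct (Z_le_gt_dec (2 * N) (Z.of_nat M)) as [Hs|Hs].
  - destruct (HL x (comp_refl x)) as [dx [Dx Bx]]. destruct (HL y Hxy) as [dy [Dy By]].
    eapply dl_mono. eapply dl_trans. apply Dx. apply dl_sym; auto. apply Dy.
    unfold Dm. lia.
  - set (h := Z.to_nat (2 * N - Z.of_nat M - 1)).
    assert (Eh : Z.of_nat h = (2 * N - Z.of_nat M - 1)%Z) by (unfold h; lia).
    set (X := fun z => dist_le adj r z h).
    set (Y := Lft (fun w => w = pi x)).
    assert (HY : forall z, Y z -> exists z', comp x z' /\ dist_le adj z' z 1).
    { intros z [z' [A B]]. exists z'. split; auto. pose proof (pi_in z') as P. rewrite B in P. exact P. }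
    assert (HXc : conn_set adj X).
    { assert (Hr : forall a, X a -> pwa X r a).
      { intros a [l [W1 [W2 W3]]]. exists l. split; auto. split; auto.
        apply Forall_forall. intros z Hz. unfold X. eapply dl_mono.
        apply (walk_pts V adj r l z W1). right; auto. auto. }
      split. exists r. apply dl_refl.
      intros a b Ha Hb. eapply pw_trans. apply (pw_rev V adj Hsym X r a (dl_refl V adj r h) (Hr a Ha)). auto. }
    assert (HYc : conn_set adj Y).
    { apply lft_conn. split. exists (pi x); auto. intros a b Ha Hb. subst. exists []. simpl. auto. }
    assert (HD : M_disjoint adj M X Y).
    { intros a b Ha Hb Hab. destruct (HY b Hb) as [b' [Hb1 Hb2]].
      destruct (HL b' Hb1) as [d [[_ Dm'] Bd]].
      assert (dist_le adj b' r (h + M + 1)).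
      { apply dl_sym; auto. replace (h + M + 1) with (h + (M + 1)) by lia.
        eapply dl_trans; eauto. eapply dl_trans; eauto. apply dl_sym; auto. }
      apply Dm' in H. lia. }
    destruct (HWB X Y HXc HYc HD) as [Sl [HS HSp]].
    assert (Hcov : forall c, comp x c -> exists s, In s Sl /\ dist_le adj s c (2 * M + 2)).
    { intros c Hc. destruct (HL c Hc) as [dc [Dc Bc]].
      assert (HYcc : Y c). { exists c. split. apply dl_refl. apply comp_pi; auto. }
      destruct (dl_sym _ _ Hsym _ _ _ (proj1 Dc)) as [l [W1 [W2 W3]]].
      destruct (le_lt_dec (length l) h) as [Hle|Hgt].
      + exfalso. apply (HD c c); [|auto|apply dl_refl]. exists l. auto.
      + rewrite <- (firstn_skipn h l) in W1, W2.
        apply walk_app in W1 as [W1a W1b].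
        rewrite last_cons_app in W2.
        set (g := last (r :: firstn h l) r) in *.
        assert (Xg : X g).
        { exists (firstn h l). split; auto. split; auto. rewrite length_firstn. lia. }
        destruct (shorten V adj g (skipn h l) W1b) as [p [Hg Hinc]]. rewrite W2 in Hg.
        destruct (HSp p g c Xg HYcc Hg) as [z [Hz [s [Hs' Hsz]]]].
        exists s. split; auto.
        apply dlt_le in Hsz as [HM Hsz].
        apply Hinc in Hz. destruct (walk_pts V adj g _ z W1b Hz) as [_ Hzc].
        rewrite W2 in Hzc. rewrite length_skipn in Hzc.
        eapply dl_mono. eapply dl_trans; eauto. lia. }
    destruct (comp_block x) as [N' [_ [_ [Hk _]]]].
    destruct (Hk x y (comp_refl x) Hxy) as [l [Hch El]].
    pose proof (kchain_Forall _ _ _ _ Hch) as Hall.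
    assert (dist_le adj x (last (x :: l) x) (n * (2 * (2 * M + 2) + 2))).
    { apply (cover (2 * M + 2) n Sl HS). eapply kchain_mono; [|eauto]. auto.
      intros c [<-|Hc]. apply Hcov, comp_refl. apply Hcov. eapply Forall_forall; eauto. }
    rewrite El in H. eapply dl_mono; eauto. unfold Dm. lia.
Qed.

Lemma pi_back M n : WB V adj M n -> forall x y m, dist_le sadj (pi x) (pi y) m ->
  dist_le adj x y (m * (Dm M n + 1) + Dm M n).
Proof.
  intros HWB.
  assert (G : forall lw w0 x y, is_walk sadj w0 lw -> proj1_sig w0 x ->
     proj1_sig (last (w0 :: lw) w0) y -> dist_le adj x y (length lw * (Dm M n + 1) + Dm M n)).
  { induction lw as [|w1 lw IH]; intros w0 x y Hw Hx Hy.
    - simpl in *. rewrite <- (pi_eq _ _ Hx) in Hy. simpl. apply (diam M n HWB); auto.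
    - destruct Hw as [[a [c [Ha [Hc Hac]]]] Hw]. rewrite last_cons2 in Hy.
      rewrite <- (pi_eq _ _ Hx) in Ha.
      pose proof (IH w1 c y Hw Hc Hy).
      simpl length.
      replace (S (length lw) * (Dm M n + 1) + Dm M n) with
        (Dm M n + (1 + (length lw * (Dm M n + 1) + Dm M n))) by lia.
      eapply dl_trans. apply (diam M n HWB); exact Ha.
      eapply dl_trans. apply dl_adj; eauto. auto. }
  intros x y m [lw [W1 [W2 W3]]]. eapply dl_mono. apply (G lw (pi x)); auto. apply pi_in.
  rewrite W2. apply pi_in. nia.
Qed.

End Skel.

Lemma minor_mono (A : Type) (ad : A -> A -> Prop) (VH EH : Type) (ends : EH -> VH * VH) F F' :
  M_fat_minor ad F ends -> F' <= F -> M_fat_minor ad F' ends.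
Proof.
  intros [B [P [H1 [H2 [H3 [H4 H5]]]]]] Hle. exists B, P.
  split; [exact H1|]. split; [exact H2|]. split; [|split].
  - intros u v Huv. eapply Md_mono; [apply (H3 u v Huv) | exact Hle | auto | auto].
  - intros e f Hef. eapply Md_mono; [apply (H4 e f Hef) | exact Hle | auto | auto].
  - intros v e Hv1 Hv2. eapply Md_mono; [apply (H5 v e Hv1 Hv2) | exact Hle | auto | auto].
Qed.

Lemma pow_pos1 a k : 1 <= (a + 1) ^ k.
Proof. induction k; simpl; nia. Qed.

Lemma Dm_mono M M' n : M <= M' -> Dm M n <= Dm M' n.
Proof. unfold Dm. nia. Qed.

Section Main.
Variable V : Type.
Variable adj : V -> V -> Prop.
Hypothesis Hsym : symmetric_adj adj.
Hypothesis Hconn : connected_graph adj.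
Variables (VH EH : Type) (ends : EH -> VH * VH).
Variables (M n M0 : nat).
Hypothesis HB : fat_bottlenecked adj M n.
Variable x0 : V.

Let Dst := Dm (M + M0) n.

Lemma main_ind k : k <= M0 -> exists (W : Type) (adjW : W -> W -> Prop) (rw : W),
  iter_skel22 V adj x0 W adjW rw k /\ symmetric_adj adjW /\ connected_graph adjW /\
  WB W adjW (M + k) n /\
  exists f : V -> W,
    (forall x y a, dist_le adj x y a -> dist_le adjW (f x) (f y) a) /\
    (forall x y m, dist_le adjW (f x) (f y) m -> dist_le adj x y ((Dst + 1) ^ k * (m + 1))) /\
    (forall w, exists x, f x = w) /\
    (forall F, 5 <= F -> M_fat_minor adjW F ends -> M_fat_minor adj (F + 3 * k) ends).
Proof.
  induction k as [|k IH]; intros Hk.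
  - exists V, adj, x0. split; [constructor|]. split; auto. split; auto. split.
    + rewrite Nat.add_0_r. intros X Y HX HY HD. destruct (HB X Y HX HY HD) as [S [H1 [_ [_ H4]]]].
      exists S. split; auto. lia.
    + exists (fun x => x). split; [auto|split; [|split]].
      * intros x y m H. eapply dl_mono; eauto. simpl. lia.
      * intros w; exists w; auto.
      * intros F _ H. rewrite Nat.add_0_r. auto.
  - destruct (IH ltac:(lia)) as [W [adjW [rw [Hit [HsW [HcW [HwW [f [Hf1 [Hf2 [Hf3 Hf4]]]]]]]]]]].
    exists (skel_vtx adjW rw 2 2), (@skel_adj W adjW rw 2 2), (pi W adjW HsW HcW rw rw).
    split; [apply iter_skel22_S; auto; apply pi_in|].
    split; [apply (sym_sadj W adjW HsW rw)|].
    split; [apply (conn_sadj W adjW HsW HcW rw)|].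
    split.
    { replace (M + S k) with (M + k + 1) by lia. apply (WB_lift W adjW HsW HcW rw); auto. }
    exists (fun x => pi W adjW HsW HcW rw (f x)). split; [|split; [|split]].
    + intros x y a H. apply (pi_lip W adjW HsW HcW rw). auto.
    + intros x y m H. apply (pi_back W adjW HsW HcW rw _ _ HwW) in H.
      apply Hf2 in H. eapply dl_mono; eauto.
      assert (Dm (M + k) n <= Dst) by (apply Dm_mono; lia).
      set (P := (Dst + 1) ^ k). simpl. fold P.
      assert (m * (Dm (M + k) n + 1) + Dm (M + k) n + 1 <= (m + 1) * (Dst + 1)) by nia.
      replace ((Dst + 1) * P * (m + 1)) with (P * ((m + 1) * (Dst + 1))) by nia.
      apply Nat.mul_le_mono_l. auto.
    + intros w. destruct (pi_surj W adjW HsW HcW rw w) as [w' Hw']. destruct (Hf3 w') as [x Hx].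
      exists x. rewrite Hx; auto.
    + intros F HF H. apply (minor_lift W adjW HsW HcW rw) in H; [|lia].
      apply minor_mono with (F' := F + 3) in H; [|lia].
      apply Hf4 in H; [|lia]. replace (F + 3 * S k) with (F + 3 + 3 * k) by lia. auto.
Qed.

End Main.

Theorem theorem3 :
  exists F : nat -> nat -> nat -> nat,
  forall (V : Type) (adj : V -> V -> Prop),
    symmetric_adj adj -> connected_graph adj -> unbounded_graph adj ->
  forall (VH EH : Type) (ends : EH -> VH * VH),
    (exists lv : list VH, forall v, In v lv) ->
    (exists le : list EH, forall e, In e le) ->
  forall M n M0 : nat,
    fat_bottlenecked adj M n ->
    ~ M_fat_minor adj M0 ends ->
  forall x0 : V,
    exists (W : Type) (adjW : W -> W -> Prop) (r : W) (k : nat),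
      iter_skel22 V adj x0 W adjW r k /\
      ~ M_fat_minor adjW 5 ends /\
      quasi_isometry adj adjW (F M n M0) (F M n M0).
Proof.
  exists (fun M n M0 => (Dm (M + M0) n + 1) ^ M0).
  intros V adj Hsym Hconn _ VH EH ends _ _ M n M0 HB HM x0.
  destruct (main_ind V adj Hsym Hconn VH EH ends M n M0 HB x0 M0 (le_n _))
    as [W [adjW [rw [Hit [HsW [HcW [HwW [f [Hf1 [Hf2 [Hf3 Hf4]]]]]]]]]]].
  exists W, adjW, rw, M0. split; auto. split.
  - intros H. apply Hf4 in H; [|lia]. apply HM. eapply minor_mono; eauto. lia.
  - pose proof (pow_pos1 (Dm (M + M0) n) M0) as Hpos.
    set (K := (Dm (M + M0) n + 1) ^ M0) in *.
    exists f. split.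
    + intros x y a b [Ha1 Ha2] [Hb1 Hb2]. split.
      * apply Ha2. eapply dl_mono. apply Hf2; eauto. nia.
      * assert (b <= a) by (apply Hb2; apply Hf1; auto). nia.
    + intros w. destruct (Hf3 w) as [x Hx]. exists x. rewrite Hx. apply dl_refl.
Qed.
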